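(* Assume the pairs $(Y_i(0),Y_i(1))$, $i\in[N]$, are independent and identically distributed, with $Y_i(a)\sim F_a$ for $a\in\{0,1\}$, where $F_a$ is supported on a finite set $\mathcal{Y}=\{y_1,\dots,y_K\}$, and assume the assignment vector $Z=(Z_1,\dots,Z_N)\in\{0,1\}^N$ is independent of the potential outcomes. Let $P_i=\mathbb{P}(Z_i=1)$, $P=\frac1N\sum_i P_i$, $\tilde P=\min(P,1-P)>0$, and $\epsilon>0$. Let $X^{true}$ be the indicator vector $X^{true,(a)}_{ik}=\mathbb{I}(Y_i(a)=y_k)$ of the true potential outcomes, let $Q$ be a symmetric matrix with $\mathbf{Var}_Z[\hat\tau]=(X^{true})^TQX^{true}$, and let $V^*$ be the maximum of $X^TQX$ over all binary $X=(X^{(a)}_{ik})$ satisfying constraints (a)--(d) in the context. Then $$\mathbb{P}\big(V^*\ge \mathbf{Var}_Z[\hat\tau]\big)\ \ge\ 1-\beta,\qquad \beta:=8\exp\Big(-\frac{\epsilon^2}{4}N\tilde P\Big)+\frac{32}{N^2\tilde P^2}\sum_{i,j\in[N]}\mathbf{Cov}(Z_i,Z_j).$$ More precisely, with probability at least $1-\beta$ the true indicator vector $X^{true}$ satisfies constraint (d), hence is feasible.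
   Context: Finite population of $N$ units with treatment indicators $Z_i\in\{0,1\}$, potential outcomes $Y_i(0),Y_i(1)$, observed outcomes $Y_i^{obs}=Y_i(Z_i)$, $N_1=\sum_i Z_i$, $N_0=N-N_1$. $\hat\tau$ is an estimator of the average treatment effect whose variance over the randomness of $Z$ (potential outcomes held fixed) is denoted $\mathbf{Var}_Z[\hat\tau]$. The constraints on binary variables $X^{(a)}_{ik}\in\{0,1\}$ ($a\in\{0,1\}$, $i\in[N]$, $k\in[K]$) are: (a) for all $i,k$: $X^{(Z_i)}_{ik}=1$ iff $Y_i^{obs}=y_k$; (b) for all $a,i,k$: $X^{(a)}_{ik}=0$ whenever $y_k\notin \mathrm{supp}(F_a)$; (c) for all $a,i$: $\sum_{k=1}^K X^{(a)}_{ik}=1$; (d) for all $a,k$: $\left|\sum_{i=1}^N X^{(a)}_{ik}\left(\frac{Z_i}{N_1}-\frac{1-Z_i}{N_0}\right)\right|\le \epsilon$. *)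

(* Defs.v *)
From HB Require Import structures.
From mathcomp Require Import all_boot all_order all_algebra.
From mathcomp Require Import boolp reals.
From mathcomp Require Import sequences exp.
Set Implicit Arguments. Unset Strict Implicit. Unset Printing Implicit Defensive.
Import Order.TTheory GRing.Theory Num.Theory.
Local Open Scope ring_scope.

(* Finite probability model.
   - units are 'I_N, outcome labels are 'I_K (label k stands for y_k = yv k);
   - an assignment is z : {ffun 'I_N -> bool}  (Z_i = 1 iff z i = true);
   - potential outcomes are y : {ffun 'I_N -> 'I_K * 'I_K},
     (y i).1 = label of Y_i(0), (y i).2 = label of Y_i(1);
   - pZ is the (arbitrary) law of Z, pF the common joint law of (Y_i(0),Y_i(1));
   - the joint law of (Z, Y) is pZ z * \prod_i pF (y i): iid pairs, Z independent
     of the potential outcomes. *)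

Definition assign (N : nat) := {ffun 'I_N -> bool}.
Definition pouts (N K : nat) := {ffun 'I_N -> 'I_K * 'I_K}.

Definition is_pmf (R : realType) (T : finType) (p : T -> R) :=
  (forall t, 0 <= p t) /\ \sum_t p t = 1.

Definition jointP (R : realType) (N K : nat) (pZ : assign N -> R)
  (pF : 'I_K * 'I_K -> R) (z : assign N) (y : pouts N K) : R :=
  pZ z * \prod_i pF (y i).

Definition Prob (R : realType) (N K : nat) (pZ : assign N -> R)
  (pF : 'I_K * 'I_K -> R) (E : assign N -> pouts N K -> bool) : R :=
  \sum_(z : assign N) \sum_(y : pouts N K | E z y) jointP pZ pF z y.

(* marginal law F_a of Y_i(a) (a = false for 0, true for 1) and its support *)
Definition margF (R : realType) (K : nat) (pF : 'I_K * 'I_K -> R)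
  (a : bool) (k : 'I_K) : R :=
  if a then \sum_l pF (l, k) else \sum_l pF (k, l).
Definition suppF (R : realType) (K : nat) (pF : 'I_K * 'I_K -> R) (a : bool)
  (k : 'I_K) : bool := 0 < margF pF a k.

Definition Ylab (N K : nat) (y : pouts N K) (a : bool) (i : 'I_N) : 'I_K :=
  if a then (y i).2 else (y i).1.

Definition Yobs (R : realType) (N K : nat) (yv : 'I_K -> R) (z : assign N)
  (y : pouts N K) (i : 'I_N) : R := yv (Ylab y (z i) i).

Definition Xidx (N K : nat) := (bool * 'I_N * 'I_K)%type.
Definition Xvar (N K : nat) := {ffun Xidx N K -> bool}.

Definition Xtrue (N K : nat) (y : pouts N K) : Xvar N K :=
  [ffun s : Xidx N K => Ylab y s.1.1 s.1.2 == s.2].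

Definition quadf (R : realType) (N K : nat) (Q : Xidx N K -> Xidx N K -> R)
  (X : Xvar N K) : R :=
  \sum_s \sum_t (X s)%:R * Q s t * (X t)%:R.

Definition N1 (R : realType) (N : nat) (z : assign N) : R := \sum_i (z i)%:R.
Definition N0 (R : realType) (N : nat) (z : assign N) : R := N%:R - N1 R z.

Definition cstr_a (R : realType) (N K : nat) (yv : 'I_K -> R) (z : assign N)
  (y : pouts N K) (X : Xvar N K) :=
  forall i k, X (z i, i, k) = true <-> Yobs yv z y i = yv k.
Definition cstr_b (R : realType) (N K : nat) (pF : 'I_K * 'I_K -> R)
  (X : Xvar N K) :=
  forall a i k, ~~ suppF pF a k -> X (a, i, k) = false.
Definition cstr_c (N K : nat) (X : Xvar N K) :=
  forall a i, (\sum_k nat_of_bool (X (a, i, k)))%N = 1%N.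
Definition cstr_d (R : realType) (N K : nat) (eps : R) (z : assign N)
  (X : Xvar N K) :=
  forall a k,
    `| \sum_i (X (a, i, k))%:R *
          ((z i)%:R / N1 R z - (1 - (z i)%:R) / N0 R z) | <= eps.

Definition feasible (R : realType) (N K : nat) (yv : 'I_K -> R)
  (pF : 'I_K * 'I_K -> R) (eps : R) (z : assign N) (y : pouts N K)
  (X : Xvar N K) :=
  [/\ cstr_a yv z y X, cstr_b pF X, cstr_c X & cstr_d eps z X].

(* variance of the estimator over the randomness of Z, potential outcomes fixed;
   the estimator is a function of the assignment and the observed outcomes *)
Definition EZ (R : realType) (N : nat) (pZ : assign N -> R) (f : assign N -> R) : R :=
  \sum_z pZ z * f z.
Definition VarZ (R : realType) (N K : nat) (pZ : assign N -> R) (yv : 'I_K -> R)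
  (tauhat : assign N -> ('I_N -> R) -> R) (y : pouts N K) : R :=
  let t := fun z => tauhat z (Yobs yv z y) in
  EZ pZ (fun z => (t z - EZ pZ t) ^+ 2).

Definition Pi (R : realType) (N : nat) (pZ : assign N -> R) (i : 'I_N) : R :=
  EZ pZ (fun z => (z i)%:R).
Definition Pbar (R : realType) (N : nat) (pZ : assign N -> R) : R :=
  (N%:R)^-1 * \sum_i Pi pZ i.
Definition Ptil (R : realType) (N : nat) (pZ : assign N -> R) : R :=
  Num.min (Pbar pZ) (1 - Pbar pZ).
Definition CovZ (R : realType) (N : nat) (pZ : assign N -> R) (i j : 'I_N) : R :=
  EZ pZ (fun z => (z i)%:R * (z j)%:R) - Pi pZ i * Pi pZ j.

Definition beta (R : realType) (N : nat) (pZ : assign N -> R) (eps : R) : R :=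
  8 * expR (- (eps ^+ 2 / 4) * N%:R * Ptil pZ)
  + 32 / (N%:R ^+ 2 * Ptil pZ ^+ 2) * \sum_i \sum_j CovZ pZ i j.

(* Main.v *)
Require Import Defs.
From HB Require Import structures.
From mathcomp Require Import all_boot all_order all_algebra.
From mathcomp Require Import boolp reals.
From mathcomp Require Import sequences exp.
From mathcomp Require Import convex interval_inference.
From mathcomp Require Import ring lra.
Import Order.TTheory GRing.Theory Num.Theory.
Local Open Scope ring_scope.

Lemma chord_exp (R : realType) (t b : R) : 0 <= t -> t <= 1 ->
  expR (t * b) <= t * expR b + (1 - t).
Proof.
move=> t0 t1.
have := @convex_expR R (Itv01 t0 t1) b 0.
rewrite !convRE /= /unstable.onem mulr0 addr0 expR0 mulr1.
exact.
Qed.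

Definition rho {R : realType} (x : R) : R := ((1 - x / 32%:R)^-1) ^+ 32.

Lemma rho_ge_exp (R : realType) (x : R) : `|x| <= 1 -> expR x <= rho x.
Proof.
move=> hx.
have hx' : -1 <= x <= 1 by rewrite -ler_norml.
case/andP: hx' => h1 h2.
have pos : 0 < 1 - x / 32%:R by lra.
have e1 : expR (x / 32%:R) <= (1 - x / 32%:R)^-1.
  have := expR_ge1Dx (- (x / 32%:R)).
  rewrite expRN => h.
  rewrite -(invrK (expR _)) lef_pV2 ?posrE ?invr_gt0 ?expR_gt0 //.
have -> : x = 32%:R * (x / 32%:R) by field.
rewrite expRM_natl /rho.
have -> : 32%:R * (x / 32%:R) / 32%:R = x / 32%:R by field.
apply: (@lerXn2r R 32) => //; rewrite nnegrE ?expR_ge0 ?invr_ge0 ?ltW //.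
Qed.

Lemma sq_step (R : realType) (a v b c b' : R) : 0 <= a -> a <= 1 + v + b * v ^+ 2 ->
  `|v| <= c -> 0 <= b -> 0 <= c -> 1 + 2 * b + 2 * b * c + b ^+ 2 * c ^+ 2 <= 4 * b' ->
  a ^+ 2 <= 1 + 2 * v + b' * (2 * v) ^+ 2.
Proof.
move=> a0 ha hv b0 c0 hb.
have hv' : -c <= v <= c by rewrite -ler_norml.
case/andP: hv' => h1 h2.
have sq : v ^+ 2 <= c ^+ 2 by rewrite -real_normK ?num_real // lerXn2r ?nnegrE // normr_ge0.
have h3 : v ^+ 3 <= c * v ^+ 2.
  have : v * v ^+ 2 <= c * v^+2 by rewrite ler_wpM2r ?sqr_ge0.
  by rewrite exprS.
have : a ^+ 2 <= (1 + v + b * v ^+ 2) ^+ 2 by rewrite lerXn2r ?nnegrE //; lra.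
move=> h; apply: (le_trans h).
have e : (1 + v + b * v ^+ 2) ^+ 2 = 1 + 2 * v + (1 + 2 * b) * v^+2 + 2 * b * v ^+ 3 + b^+2 * (v^+2 * v^+2) by ring.
rewrite e.
have h4 : v^+2 * v^+2 <= c^+2 * v^+2 by rewrite ler_wpM2r ?sqr_ge0.
have h5 : 2 * b * v ^+ 3 <= 2 * b * (c * v^+2).
  by apply: ler_wpM2l => //; apply: mulr_ge0.
have h6 : b^+2 * (v^+2 * v^+2) <= b^+2 * (c^+2 * v^+2).
  by apply: ler_wpM2l => //; apply: sqr_ge0.
have h7 : (1 + 2 * b + 2 * b * c + b ^+ 2 * c ^+ 2) * v^+2 <= (4 * b') * v^+2.
  by apply: ler_wpM2r => //; apply: sqr_ge0.
have -> : b' * (2 * v) ^+ 2 = 4 * b' * v ^+2 by ring.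
nra.
Qed.

Lemma rho_le (R : realType) (x : R) : `|x| <= 1 -> rho x <= 1 + x + 7/9 * x ^+ 2.
Proof.
move=> hx.
have hx' : -1 <= x <= 1 by rewrite -ler_norml.
case/andP: hx' => h1 h2.
set t := (1 - x / 32%:R)^-1.
have pos : 0 < 1 - x / 32%:R by lra.
have t0 : 0 <= t by rewrite ltW // invr_gt0.
have ht : t <= 1 + x / 32%:R + 32/31 * (x / 32%:R) ^+ 2.
  rewrite /t -(@ler_pM2r _ (1 - x / 32%:R)) // mulVf ?gt_eqF //.
  set u := x / 32%:R.
  have hu1 : u <= 1/32 by rewrite /u; lra.
  have hu2 : -(1/32) <= u by rewrite /u; lra.
  have sq : 0 <= u ^+ 2 by apply: sqr_ge0.
  have : u * u^+2 <= 1/32 * u ^+ 2 by apply: ler_wpM2r.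
  rewrite -exprS => h3.
  have -> : (1 + u + 32 / 31 * u ^+ 2) * (1 - u) = 1 + (1/31) * u^+2 - 32/31 * u ^+ 3.
    by field.
  lra.
have nb (d : R) (v : R) : v = x / d -> 1 <= d -> `|v| <= 1 / d.
  move=> -> d1; rewrite normrM normfV (gtr0_norm (lt_le_trans ltr01 d1)).
  rewrite mul1r ler_pdivrMr ?(lt_le_trans ltr01 d1) // mulVf ?gt_eqF ?(lt_le_trans ltr01 d1) //.
have s1 : t^+2 <= 1 + x/16 + 4/5 * (x/16)^+2.
  have := @sq_step R t (x/32) (32/31) (1/32) (4/5) t0 ht (nb 32 _ erefl _).
  have -> : 2 * (x / 32) = x / 16 by field.
  apply => //; lra.
have s2 : (t^+2)^+2 <= 1 + x/8 + 7/10 * (x/8)^+2.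
  have := @sq_step R (t^+2) (x/16) (4/5) (1/16) (7/10) (sqr_ge0 _) s1 (nb 16 _ erefl _).
  have -> : 2 * (x / 16) = x / 8 by field.
  apply => //; lra.
have s3 : ((t^+2)^+2)^+2 <= 1 + x/4 + 13/20 * (x/4)^+2.
  have := @sq_step R _ (x/8) (7/10) (1/8) (13/20) (sqr_ge0 _) s2 (nb 8 _ erefl _).
  have -> : 2 * (x / 8) = x / 4 by field.
  apply => //; lra.
have s4 : (((t^+2)^+2)^+2)^+2 <= 1 + x/2 + 2/3 * (x/2)^+2.
  have := @sq_step R _ (x/4) (13/20) (1/4) (2/3) (sqr_ge0 _) s3 (nb 4 _ erefl _).
  have -> : 2 * (x / 4) = x / 2 by field.
  apply => //; lra.
have s5 : ((((t^+2)^+2)^+2)^+2)^+2 <= 1 + x + 7/9 * x^+2.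
  have := @sq_step R _ (x/2) (2/3) (1/2) (7/9) (sqr_ge0 _) s4 (nb 2 _ erefl _).
  have -> : 2 * (x / 2) = x by field.
  apply => //; lra.
suff -> : rho x = ((((t^+2)^+2)^+2)^+2)^+2 by [].
by rewrite /rho -/t -!exprM.
Qed.

Lemma prod_lb {R : realType} {N : nat} (B : 'I_N -> bool) (v r : 'I_N -> R) :
  (forall i, expR (v i) <= r i) ->
  expR (\sum_i (B i)%:R * v i) <= \prod_i (if B i then r i else 1).
Proof.
move=> h; rewrite expR_sum; apply: ler_prod => i _.
rewrite expR_ge0 /=; case: (B i); first by rewrite mul1r.
by rewrite mul0r expR0.
Qed.

Lemma prod_ub {R : realType} {N : nat} (p : R) (r : 'I_N -> R) :
  0 <= p -> p <= 1 -> (forall i, 0 <= r i) ->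
  \prod_i (1 + p * (r i - 1)) <= expR (p * \sum_i (r i - 1)).
Proof.
move=> p0 p1 h; rewrite big_distrr /= expR_sum; apply: ler_prod => i _.
rewrite expR_ge1Dx andbT.
have := h i => ?; nra.
Qed.

Lemma markov {R : realType} {T : finType} (W g : T -> R) (E : pred T) (tau : R) :
  0 < tau -> (forall y, 0 <= W y) -> (forall y, 0 <= g y) -> (forall y, E y -> tau <= g y) ->
  \sum_(y | E y) W y <= (\sum_y W y * g y) / tau.
Proof.
move=> t0 hW hg hE; rewrite ler_pdivlMr // big_distrl /=.
rewrite [X in _ <= X](bigID E) /= -[X in X <= _]addr0.
apply: lerD; last by apply: sumr_ge0 => y _; apply: mulr_ge0.
by apply: ler_sum => y hy; apply: ler_wpM2l => //; apply: hE.
Qed.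

Lemma chord2 {R : realType} (q A : R) : 0 <= q -> q <= 1/2 ->
  expR (q * A) - 1 <= 2 * q * (expR (A / 2) - 1).
Proof.
move=> q0 q1.
have := @chord_exp R (2 * q) (A / 2).
have -> : 2 * q * (A / 2) = q * A by field.
move=> h; have := h ltac:(lra) ltac:(lra); lra.
Qed.

Definition lab {K : nat} (a : bool) (v : 'I_K * 'I_K) : 'I_K := if a then v.2 else v.1.

Lemma sum_prod_distr {R : realType} {N K : nat} (f : 'I_N -> 'I_K * 'I_K -> R) :
  \sum_(y : pouts N K) \prod_i f i (y i) = \prod_i \sum_v f i v.
Proof. by rewrite bigA_distr_bigA. Qed.

Lemma sum_W {R : realType} {N K : nat} (pF : 'I_K * 'I_K -> R) : is_pmf pF ->
  \sum_(y : pouts N K) \prod_i pF (y i) = 1.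
Proof.
case=> _ h1; rewrite (sum_prod_distr (fun i v => pF v)).
by rewrite big1 // => i _; rewrite h1.
Qed.

Lemma sum_if {R : realType} {K : nat} (pF : 'I_K * 'I_K -> R) (P : pred ('I_K * 'I_K)) (r : R) :
  is_pmf pF ->
  \sum_v pF v * (if P v then r else 1) = 1 + (\sum_(v | P v) pF v) * (r - 1).
Proof.
case=> _ h1.
rewrite big_distrl /= -[X in X + _]h1 [X in _ + X]big_mkcond -big_split /=.
by apply: eq_bigr => v _; case: (P v); ring.
Qed.

Lemma margF_sum {R : realType} {K : nat} (pF : 'I_K * 'I_K -> R) a k :
  \sum_(v | lab a v == k) pF v = margF pF a k.
Proof.
transitivity (\sum_(v : 'I_K * 'I_K)
   (fun l j => if lab a (l, j) == k then pF (l, j) else 0) v.1 v.2).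
  by rewrite big_mkcond; apply: eq_bigr => -[l j] _.
rewrite -(pair_bigA _ (fun l j => if lab a (l, j) == k then pF (l, j) else 0)) /= /margF /lab; case: a => /=.
  by apply: eq_bigr => l _; rewrite -big_mkcond /= big_pred1_eq.
rewrite (bigD1 k) //= [X in _ + X]big1 ?addr0.
  by apply: eq_bigr => j _; rewrite eqxx.
by move=> l /negbTE hl; apply: big1 => j _; rewrite hl.
Qed.

Lemma margF_sumN {R : realType} {K : nat} (pF : 'I_K * 'I_K -> R) a k : is_pmf pF ->
  \sum_(v | lab a v != k) pF v = 1 - margF pF a k.
Proof.
case=> _ h1; rewrite -h1 [X in _ = X - _](bigID (fun v => lab a v == k)) /= margF_sum; ring.
Qed.

Lemma margF_ge0 {R : realType} {K : nat} (pF : 'I_K * 'I_K -> R) a k : is_pmf pF ->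
  0 <= margF pF a k.
Proof. by case=> h0 _; rewrite -margF_sum sumr_ge0. Qed.

Lemma margF_le1 {R : realType} {K : nat} (pF : 'I_K * 'I_K -> R) a k : is_pmf pF ->
  margF pF a k <= 1.
Proof.
move=> h; have := margF_sumN pF a k h; have := h.1 => h0.
have : 0 <= \sum_(v | lab a v != k) pF v by rewrite sumr_ge0.
move=> ? ?; lra.
Qed.

Lemma margF_total {R : realType} {K : nat} (pF : 'I_K * 'I_K -> R) a : is_pmf pF ->
  \sum_k margF pF a k = 1.
Proof.
case=> _ h1; rewrite -h1 (partition_big (lab a) xpredT) //=.
by apply: eq_bigr => k _; rewrite margF_sum.
Qed.

Lemma mgf {R : realType} {N K : nat} (pF : 'I_K * 'I_K -> R) (P : pred ('I_K * 'I_K))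
  (r : 'I_N -> R) : is_pmf pF ->
  \sum_(y : pouts N K) (\prod_i pF (y i)) * \prod_i (if P (y i) then r i else 1)
   = \prod_i (1 + (\sum_(v | P v) pF v) * (r i - 1)).
Proof.
move=> hp.
transitivity (\prod_i \sum_v pF v * (if P v then r i else 1)); last first.
  by apply: eq_bigr => i _; apply: sum_if.
rewrite bigA_distr_bigA /=; apply: eq_bigr => y _.
by rewrite -big_split.
Qed.

Lemma cosh_ge {R : realType} (x : R) : 0 <= expR x + expR (- x) - 2.
Proof. have := expR_ge1Dx x; have := expR_ge1Dx (- x); lra. Qed.

Lemma cosh_tau {R : realType} (lam eps d : R) : 0 <= lam -> eps < `|d| ->
  expR (lam * eps) - 2 <= expR (lam * d) + expR (- (lam * d)) - 2.
Proof.
move=> l0 hd; have e1 := expR_ge0 (lam * d); have e2 := expR_ge0 (- (lam * d)).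
case: (lerP 0 d) => hd0.
  rewrite ger0_norm // in hd.
  have : expR (lam * eps) <= expR (lam * d) by rewrite ler_expR ler_wpM2l // ltW.
  lra.
rewrite ltr0_norm // in hd.
have : expR (lam * eps) <= expR (- (lam * d)).
  by rewrite ler_expR -mulrN ler_wpM2l // ltW.
lra.
Qed.

Lemma core {R : realType} {N K : nat} (pF : 'I_K * 'I_K -> R) (hp : is_pmf pF)
  (Pv : pred ('I_K * 'I_K)) (w : 'I_N -> R) (D : pouts N K -> R) (lam eps : R) :
  0 <= lam -> 2 < expR (lam * eps) ->
  (forall i, expR (lam * w i) <= rho (lam * w i)) ->
  (forall i, expR (- (lam * w i)) <= rho (- (lam * w i))) ->
  (forall y : pouts N K, let X := \sum_i (Pv (y i))%:R * w i in X = D y \/ X = - D y) ->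
  \sum_(y : pouts N K | eps < `|D y|) \prod_i pF (y i) <=
   (\prod_i (1 + (\sum_(v | Pv v) pF v) * (rho (lam * w i) - 1))
    + \prod_i (1 + (\sum_(v | Pv v) pF v) * (rho (- (lam * w i)) - 1)) - 2)
   / (expR (lam * eps) - 2).
Proof.
move=> l0 hl hr hs hD.
set g := fun y : pouts N K => \prod_i (if Pv (y i) then rho (lam * w i) else 1)
   + \prod_i (if Pv (y i) then rho (- (lam * w i)) else 1) - 2.
have glb : forall y, expR (lam * D y) + expR (- (lam * D y)) - 2 <= g y.
  move=> y.
  have h1 := prod_lb (fun i => Pv (y i)) (fun i => lam * w i) _ hr.
  have h2 := prod_lb (fun i => Pv (y i)) (fun i => - (lam * w i)) _ hs.
  have e1 : \sum_i (Pv (y i))%:R * (lam * w i) = lam * \sum_i (Pv (y i))%:R * w i.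
    by rewrite big_distrr; apply: eq_bigr => i _ /=; ring.
  have e2 : \sum_i (Pv (y i))%:R * - (lam * w i) = - (lam * \sum_i (Pv (y i))%:R * w i).
    by rewrite big_distrr -sumrN; apply: eq_bigr => i _ /=; ring.
  rewrite e1 in h1; rewrite e2 in h2.
  rewrite /g; case: (hD y) => /= hX; rewrite hX in h1 h2.
    lra.
  rewrite mulrN opprK in h2; rewrite mulrN in h1; lra.
have t0 : 0 < expR (lam * eps) - 2 by lra.
have hW : forall y : pouts N K, 0 <= \prod_i pF (y i).
  by move=> y; apply: prodr_ge0 => i _; case: hp => h _; apply: h.
have hg : forall y, 0 <= g y.
  move=> y; apply: le_trans (glb y); exact: cosh_ge.
have hE : forall y, eps < `|D y| -> expR (lam * eps) - 2 <= g y.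
  move=> y hy; apply: le_trans (glb y); exact: cosh_tau.
apply: (le_trans (@markov R _ (fun y : pouts N K => \prod_i pF (y i)) g
   (fun y => eps < `|D y|) (expR (lam * eps) - 2) t0 hW hg hE)).
apply: ler_wpM2r; first by rewrite invr_ge0 ltW.
have -> : \sum_(y : pouts N K) (\prod_i pF (y i)) * g y =
   \sum_(y : pouts N K) (\prod_i pF (y i)) * \prod_i (if Pv (y i) then rho (lam * w i) else 1)
   + \sum_(y : pouts N K) (\prod_i pF (y i)) * \prod_i (if Pv (y i) then rho (- (lam * w i)) else 1)
   - 2 * \sum_(y : pouts N K) \prod_i pF (y i).
  rewrite big_distrr -big_split -sumrB; apply: eq_bigr => y _; rewrite /g /=; ring.
by rewrite mgf // mgf // sum_W // mulr1.
Qed.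

Lemma sum_ge_exp {R : realType} {N : nat} (v : 'I_N -> R) :
  (\sum_i v i = 0) -> (forall i, expR (v i) <= rho (v i)) ->
  0 <= \sum_i (rho (v i) - 1).
Proof.
move=> h0 h; apply: le_trans (_ : \sum_i v i <= _); first by rewrite h0.
apply: ler_sum => i _; have := h i; have := expR_ge1Dx (v i); lra.
Qed.

Lemma perak {R : realType} {N K : nat} (pF : 'I_K * 'I_K -> R) (hp : is_pmf pF)
  (a : bool) (k : 'I_K) (w : 'I_N -> R) (lam eps : R) :
  0 <= lam -> 2 < expR (lam * eps) -> \sum_i w i = 0 ->
  (forall i, expR (lam * w i) <= rho (lam * w i)) ->
  (forall i, expR (- (lam * w i)) <= rho (- (lam * w i))) ->
  \sum_(y : pouts N K | eps < `|\sum_i (Ylab y a i == k)%:R * w i|) \prod_i pF (y i) <=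
   2 * margF pF a k * (expR ((\sum_i (rho (lam * w i) - 1)) / 2)
                       + expR ((\sum_i (rho (- (lam * w i)) - 1)) / 2) - 2)
   / (expR (lam * eps) - 2).
Proof.
move=> l0 hl hw0 hr hs.
set Ar := \sum_i (rho (lam * w i) - 1).
set As := \sum_i (rho (- (lam * w i)) - 1).
set p := margF pF a k.
have Ar0 : 0 <= Ar.
  apply: sum_ge_exp => //; by rewrite -big_distrr /= hw0 mulr0.
have As0 : 0 <= As.
  apply: sum_ge_exp => //; by rewrite sumrN -big_distrr /= hw0 mulr0 oppr0.
have p0 : 0 <= p by apply: margF_ge0.
have p1 : p <= 1 by apply: margF_le1.
have eA := expR_ge1Dx (Ar / 2); have eS := expR_ge1Dx (As / 2).
have t0 : 0 < expR (lam * eps) - 2 by lra.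
have rpos : forall i, 0 <= rho (lam * w i).
  by move=> i; apply: le_trans (hr i); apply: expR_ge0.
have spos : forall i, 0 <= rho (- (lam * w i)).
  by move=> i; apply: le_trans (hs i); apply: expR_ge0.
case: (lerP p (1/2)) => hp2.
  have := core pF hp (fun v => lab a v == k) w (fun y => \sum_i (Ylab y a i == k)%:R * w i) lam eps l0 hl hr hs.
  rewrite margF_sum -/p => h; apply: (le_trans (h (fun y => or_introl erefl))).
  apply: ler_wpM2r; first by rewrite invr_ge0 ltW.
  have u1 := prod_ub p (fun i => rho (lam * w i)) p0 p1 rpos.
  have u2 := prod_ub p (fun i => rho (- (lam * w i))) p0 p1 spos.
  have c1 := chord2 p Ar p0 hp2; have c2 := chord2 p As p0 hp2.
  rewrite -/Ar in u1; rewrite -/As in u2.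
  lra.
have q0 : 0 <= 1 - p by lra.
have q1 : 1 - p <= 1 by lra.
have q2 : 1 - p <= 1/2 by lra.
have := core pF hp (fun v => lab a v != k) w (fun y => \sum_i (Ylab y a i == k)%:R * w i) lam eps l0 hl hr hs.
rewrite margF_sumN // -/p => h.
have hD : forall y : pouts N K, let X := \sum_i (lab a (y i) != k)%:R * w i in
    X = (fun y => \sum_i (Ylab y a i == k)%:R * w i) y \/
    X = - (fun y => \sum_i (Ylab y a i == k)%:R * w i) y.
  move=> y; right => /=.
  transitivity (\sum_i w i - \sum_i (Ylab y a i == k)%:R * w i); last by rewrite hw0 add0r.
  rewrite -sumrB; apply: eq_bigr => i _.
  by rewrite /Ylab /lab; case: (_ == k) => /=; ring.
apply: (le_trans (h hD)).
apply: ler_wpM2r; first by rewrite invr_ge0 ltW.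
have u1 := prod_ub (1 - p) (fun i => rho (lam * w i)) q0 q1 rpos.
have u2 := prod_ub (1 - p) (fun i => rho (- (lam * w i))) q0 q1 spos.
have c1 := chord2 (1 - p) Ar q0 q2; have c2 := chord2 (1 - p) As q0 q2.
rewrite -/Ar in u1; rewrite -/As in u2.
nra.
Qed.

Lemma final_ineq {R : realType} (V u Ar As : R) : 0 <= u -> 31/64 * u <= V ->
  Ar <= 7/9 * V -> As <= 7/9 * V -> 8 < expR (u / 4) ->
  4 * (expR (Ar / 2) + expR (As / 2) - 2) / (expR V - 2) <= 8 * expR (- (u / 4)).
Proof.
move=> u0 hV hA hS h8.
have e28 : 4/3 <= expR (u / 28).
  rewrite leNgt; apply/negP => hlt.
  have : expR (u / 4) <= (4/3) ^+ 7.
    have -> : u / 4 = 7%:R * (u / 28) by field.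
    rewrite expRM_natl; apply: lerXn2r; rewrite ?nnegrE ?expR_ge0 ?ltW //; lra.
  have : (4/3 : R) ^+ 7 < 8 by rewrite -subr_gt0; rewrite !exprS expr0; lra.
  lra.
have eA : expR (Ar / 2) <= expR (7/18 * V) by rewrite ler_expR; lra.
have eS : expR (As / 2) <= expR (7/18 * V) by rewrite ler_expR; lra.
set X := expR (7/18 * V).
set m := expR (- (u / 4)).
have m0 : 0 < m by apply: expR_gt0.
have eV : expR V = X * expR (11/18 * V - u / 4) * expR (u / 4).
  by rewrite -!expRD; congr expR; field.
have e2 : expR (u / 28) <= expR (11/18 * V - u / 4) by rewrite ler_expR; lra.
have hm : m * expR (u / 4) = 1 by rewrite /m -expRD addNr expR0.
have X0 : 0 < X by apply: expR_gt0.
have eVgt : 8 < expR V.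
  apply: lt_le_trans h8 _; rewrite ler_expR; lra.
have t0 : 0 < expR V - 2 by lra.
rewrite ler_pdivrMr //.
have key : 4/3 * X <= m * expR V.
  rewrite eV.
  have -> : m * (X * expR (11 / 18 * V - u / 4) * expR (u / 4)) =
            X * expR (11 / 18 * V - u / 4) * (m * expR (u / 4)) by ring.
  rewrite hm mulr1.
  have : 4/3 <= expR (11 / 18 * V - u / 4) by lra.
  move=> h; rewrite [X in _ <= X]mulrC; apply: ler_wpM2r => //; exact: ltW.
have h16 : 16 * m <= 2 * (m * expR V).
  have : m * 8 <= m * expR V by apply: ler_wpM2l; [exact: ltW | exact: ltW].
  lra.
have -> : 8 * m * (expR V - 2) = 8 * (m * expR V) - 16 * m by ring.
rewrite /X in key; lra.
Qed.

Lemma union_bound {R : realType} {T : finType} {K : nat} (W : T -> R) (P : pred T)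
  (Q : bool -> 'I_K -> pred T) :
  (forall y, 0 <= W y) -> (forall y, P y -> exists a k, Q a k y) ->
  \sum_(y | P y) W y <= \sum_a \sum_k \sum_(y | Q a k y) W y.
Proof.
move=> hW hPQ.
have -> : \sum_a \sum_k \sum_(y | Q a k y) W y =
          \sum_y \sum_a \sum_k (if Q a k y then W y else 0).
  under eq_bigr => a _ do under eq_bigr => k _ do rewrite big_mkcond.
  under eq_bigr => a _ do rewrite exchange_big.
  by rewrite exchange_big.
rewrite big_mkcond; apply: ler_sum => y _.
case: ifP => hP; last first.
  by apply: sumr_ge0 => a _; apply: sumr_ge0 => k _; case: ifP.
have [a [k hq]] := hPQ y hP.
rewrite (bigD1 a) //= (bigD1 k) //= hq -addrA lerDl.
apply: addr_ge0; first by apply: sumr_ge0 => j _; case: ifP.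
by apply: sumr_ge0 => b _; apply: sumr_ge0 => j _; case: ifP.
Qed.

Lemma sum_ones {R : realType} {N : nat} : \sum_(i < N) (1 : R) = N%:R.
Proof. by rewrite sumr_const card_ord. Qed.

Lemma goodz {R : realType} {N K : nat} (pF : 'I_K * 'I_K -> R) (hp : is_pmf pF)
  (z : assign N) (eps L : R) :
  0 < eps -> eps < 1 -> 0 < L -> 0 < N1 R z -> 0 < N0 R z ->
  (N1 R z)^-1 + (N0 R z)^-1 <= 64/31 / L ->
  8 < expR (eps ^+ 2 * L / 4) ->
  \sum_(y : pouts N K | ~~ `[< cstr_d eps z (Xtrue y) >]) \prod_i pF (y i)
    <= 8 * expR (- (eps ^+ 2 * L / 4)).
Proof.
move=> e0 e1 L0 n10 n00 hS h8.
set n1 := N1 R z; set n0 := N0 R z.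
set w := fun i : 'I_N => (z i)%:R / n1 - (1 - (z i)%:R) / n0.
set S := n1^-1 + n0^-1.
have S0 : 0 < S by rewrite /S addr_gt0 // invr_gt0.
have hsz : \sum_i (z i)%:R = n1 by [].
have hs1z : \sum_i (1 - (z i)%:R) = n0 by rewrite sumrB sum_ones.
have hw0 : \sum_i w i = 0.
  by rewrite /w sumrB -!big_distrl /= hsz hs1z !divff ?gt_eqF // subrr.
have hw2 : \sum_i w i ^+ 2 = S.
  transitivity (\sum_i ((z i)%:R / n1 ^+ 2 + (1 - (z i)%:R) / n0 ^+ 2)).
    apply: eq_bigr => i _; rewrite /w; case: (z i) => /=; field;
      by apply/andP; split; rewrite gt_eqF.
  rewrite big_split /= -!big_distrl /= hsz hs1z /S; field.
  by apply/andP; split; rewrite gt_eqF.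
have hwb : forall i, `|w i| <= S.
  move=> i; rewrite /w /S; case: (z i) => /=.
    rewrite subrr mul0r subr0 div1r gtr0_norm ?invr_gt0 // lerDl invr_ge0 ltW //.
  rewrite subr0 mul0r sub0r div1r normrN gtr0_norm ?invr_gt0 // lerDr invr_ge0 ltW //.
set lam := eps / S.
have l0 : 0 <= lam by rewrite /lam divr_ge0 // ltW.
have hlw : forall i, `|lam * w i| <= 1.
  move=> i; rewrite normrM (ger0_norm l0).
  apply: le_trans (_ : lam * S <= 1).
    by apply: ler_wpM2l.
  rewrite /lam mulfVK ?gt_eqF //; exact: ltW.
have hr : forall i, expR (lam * w i) <= rho (lam * w i) by move=> i; apply: rho_ge_exp.
have hs : forall i, expR (- (lam * w i)) <= rho (- (lam * w i)).
  by move=> i; apply: rho_ge_exp; rewrite normrN.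
set V := eps ^+ 2 / S.
set u := eps ^+ 2 * L.
have hV : 31/64 * u <= V.
  rewrite /V /u.
  have : S * (31 / 64 * L) <= 1.
    have -> : S * (31 / 64 * L) = (31/64 * L) * S by ring.
    rewrite -ler_pdivlMl; last by rewrite mulr_gt0.
    apply: le_trans hS _; rewrite le_eqVlt; apply/orP; left; apply/eqP; field.
    by rewrite gt_eqF.
  move=> h; rewrite ler_pdivlMr //.
  have -> : 31 / 64 * (eps ^+ 2 * L) * S = eps ^+ 2 * (S * (31 / 64 * L)) by ring.
  by rewrite ler_piMr // sqr_ge0.
have lamV : lam * eps = V by rewrite /lam /V; field; rewrite gt_eqF.
have lam2V : lam ^+ 2 * S = V by rewrite /lam /V; field; rewrite gt_eqF.
have u0 : 0 <= u by rewrite /u mulr_ge0 ?sqr_ge0 // ltW.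
have hAgen : forall c : R, c ^+ 2 = 1 ->
    \sum_i (rho (c * (lam * w i)) - 1) <= 7/9 * V.
  move=> c hc.
  apply: le_trans (_ : \sum_i (c * lam * w i + 7/9 * (lam ^+ 2 * w i ^+ 2)) <= _).
    apply: ler_sum => i _.
    have hn : `|c * (lam * w i)| <= 1.
      have : `|c| = 1.
        have := normr_ge0 c; have : `|c| ^+ 2 = 1 by rewrite real_normK ?num_real.
        move=> h1 h2; nra.
      by move=> nc; rewrite normrM nc mul1r.
    have := rho_le _ _ hn.
    have -> : (c * (lam * w i)) ^+ 2 = lam ^+ 2 * w i ^+ 2.
      by rewrite !exprMn hc mul1r.
    move=> h; rewrite -mulrA; lra.
  rewrite big_split /=.
  have f1 : \sum_i c * lam * w i = c * lam * \sum_i w i by rewrite big_distrr.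
  have f2 : \sum_i 7 / 9 * (lam ^+ 2 * w i ^+ 2) = 7 / 9 * (lam ^+ 2 * \sum_i w i ^+ 2).
    by rewrite !big_distrr.
  by rewrite f1 f2 hw0 hw2 lam2V mulr0 add0r.
have hA : \sum_i (rho (lam * w i) - 1) <= 7/9 * V.
  have := hAgen 1 (expr1n _ _); by under eq_bigr do rewrite mul1r.
have hB : \sum_i (rho (- (lam * w i)) - 1) <= 7/9 * V.
  have := hAgen (-1) ltac:(by rewrite sqrrN expr1n); by under eq_bigr do rewrite mulN1r.
have h8' : 8 < expR (u / 4) by rewrite /u.
have hl : 2 < expR (lam * eps).
  rewrite lamV; apply: lt_trans (_ : 2 < 8) _; first by lra.
  apply: lt_le_trans h8' _; rewrite ler_expR; lra.
set D := fun (y : pouts N K) a k => \sum_i (Ylab y a i == k)%:R * w i.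
apply: le_trans (_ : \sum_a \sum_k \sum_(y : pouts N K | eps < `|D y a k|) \prod_i pF (y i) <= _).
  apply: union_bound.
    by move=> y; apply: prodr_ge0 => i _; case: hp => h _; apply: h.
  move=> y /asboolPn hy.
  case: (boolP [exists a, exists k, eps < `|D y a k|]).
    by move=> /existsP [a /existsP [k h]]; exists a, k.
  rewrite negb_exists => /forallP H; exfalso; apply: hy => a k.
  have := H a; rewrite negb_exists => /forallP /(_ k); rewrite -leNgt => h.
  apply: le_trans h; rewrite le_eqVlt; apply/orP; left; apply/eqP.
  by congr `|_|; apply: eq_bigr => i _; rewrite ffunE.
set G := expR ((\sum_i (rho (lam * w i) - 1)) / 2)
         + expR ((\sum_i (rho (- (lam * w i)) - 1)) / 2) - 2.
apply: le_trans (_ : \sum_(a : bool) 2 * G / (expR (lam * eps) - 2) <= _).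
  apply: ler_sum => a _.
  apply: le_trans (_ : \sum_k margF pF a k * (2 * G / (expR (lam * eps) - 2)) <= _).
    apply: ler_sum => k _.
    apply: le_trans (perak pF hp a k w lam eps l0 hl hw0 hr hs) _.
    rewrite le_eqVlt; apply/orP; left; apply/eqP; rewrite -/G; ring.
  by rewrite -big_distrl /= margF_total // mul1r.
rewrite big_bool /=.
have := final_ineq V u _ _ u0 hV hA hB h8'.
rewrite -lamV -/G => h.
have -> : 2 * G / (expR (lam * eps) - 2) + 2 * G / (expR (lam * eps) - 2)
        = 4 * G / (expR (lam * eps) - 2) by ring.
exact: h.
Qed.

Lemma D_le1 {R : realType} {N K : nat} (z : assign N) (y : pouts N K) a k :
  0 < N1 R z -> 0 < N0 R z ->
  `| \sum_i ((Xtrue y) (a, i, k))%:R *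
          ((z i)%:R / N1 R z - (1 - (z i)%:R) / N0 R z) | <= 1.
Proof.
move=> n10 n00; rewrite ler_norml; apply/andP; split.
  apply: le_trans (_ : - (\sum_i (1 - (z i)%:R) / N0 R z) <= _).
    rewrite -big_distrl /= sumrB sum_ones mulfV ?gt_eqF //.
  rewrite -sumrN; apply: ler_sum => i _.
  have i1 : 0 < (N1 R z)^-1 by rewrite invr_gt0.
  have i0 : 0 < (N0 R z)^-1 by rewrite invr_gt0.
  case: (z i) => /=; case: (Xtrue y _) => /=; rewrite /=; lra.
apply: le_trans (_ : \sum_i (z i)%:R / N1 R z <= _); last first.
  by rewrite -big_distrl /= mulfV ?gt_eqF.
apply: ler_sum => i _.
have i1 : 0 < (N1 R z)^-1 by rewrite invr_gt0.
  have i0 : 0 < (N0 R z)^-1 by rewrite invr_gt0.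
case: (z i) => /=; case: (Xtrue y _) => /=; lra.
Qed.

Lemma prob_split {R : realType} {N K : nat} (pZ : assign N -> R) (pF : 'I_K * 'I_K -> R)
  (E : assign N -> pouts N K -> bool) : is_pmf pZ -> is_pmf pF ->
  Prob pZ pF E = 1 - \sum_z pZ z * \sum_(y : pouts N K | ~~ E z y) \prod_i pF (y i).
Proof.
move=> hZ hF; rewrite /Prob /jointP.
have h1 := sum_W (N:=N) pF hF.
rewrite -[X in X - _]hZ.2 -sumrB; apply: eq_bigr => z _.
rewrite -!big_distrr /= -[X in X - _]mulr1 -mulrBr; congr (_ * _).
by rewrite -[X in _ = X - _]h1 [X in _ = X - _](bigID (fun y => E z y)) /= addrK.
Qed.

Lemma Em {R : realType} {N : nat} (pZ : assign N -> R) :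
  \sum_z pZ z * N1 R z = \sum_i Pi pZ i.
Proof.
rewrite /N1 /Pi /EZ; under eq_bigr do rewrite big_distrr.
by rewrite exchange_big.
Qed.

Lemma var_eq {R : realType} {N : nat} (pZ : assign N -> R) : is_pmf pZ ->
  \sum_z pZ z * (N1 R z - \sum_i Pi pZ i) ^+ 2 = \sum_i \sum_j CovZ pZ i j.
Proof.
move=> hZ; set m := \sum_i Pi pZ i.
have E2 : \sum_z pZ z * N1 R z ^+ 2 =
          \sum_i \sum_j EZ pZ (fun z => (z i)%:R * (z j)%:R).
  rewrite /EZ /N1.
  transitivity (\sum_z \sum_i \sum_j pZ z * ((z i)%:R * (z j)%:R)).
    apply: eq_bigr => z _; rewrite expr2 big_distrl /= big_distrr /=.
    by apply: eq_bigr => i _; rewrite big_distrr /= big_distrr /=.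
  rewrite exchange_big; apply: eq_bigr => i _; by rewrite exchange_big.
have EC : \sum_i \sum_j CovZ pZ i j =
          \sum_i \sum_j EZ pZ (fun z => (z i)%:R * (z j)%:R) - m ^+ 2.
  rewrite /CovZ expr2 big_distrl /= -sumrB; apply: eq_bigr => i _.
  by rewrite big_distrr /= -sumrB.
rewrite EC -E2.
have gen : forall c : R, \sum_z pZ z * (N1 R z - c) ^+ 2 =
   \sum_z pZ z * N1 R z ^+ 2 - 2 * c * \sum_z pZ z * N1 R z + c ^+ 2 * \sum_z pZ z.
  move=> c; rewrite !big_distrr /= -sumrB -big_split /=; apply: eq_bigr => z _; ring.
rewrite gen.
by rewrite Em -/m hZ.2; ring.
Qed.

Lemma cheb {R : realType} {N : nat} (pZ : assign N -> R) (L : R) : is_pmf pZ -> 0 < L ->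
  \sum_z pZ z * ((L ^+ 2 / 32 <= (N1 R z - \sum_i Pi pZ i) ^+ 2)%R : bool)%:R
    <= 32 / L ^+ 2 * \sum_i \sum_j CovZ pZ i j.
Proof.
move=> hZ L0; rewrite -var_eq // big_distrr /=; apply: ler_sum => z _.
have p0 := hZ.1 z.
have L2 : 0 < L ^+ 2 by rewrite exprn_gt0.
set d := (N1 R z - \sum_i Pi pZ i) ^+ 2.
have d0 : 0 <= d by apply: sqr_ge0.
case hb: (L ^+ 2 / 32 <= d)%R => /=.
  rewrite mulr1.
  have : 1 <= 32 / L ^+ 2 * d.
    rewrite ler_pdivrMr // in hb.
    by rewrite mulrAC ler_pdivlMr // mul1r mulrC.
  move=> h1; rewrite mulrCA; rewrite -{1}[pZ z]mulr1; apply: ler_wpM2l => //.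
rewrite mulr0 mulrCA mulr_ge0 // mulr_ge0 //.
by rewrite divr_ge0 // ltW.
Qed.

Lemma Sbound {R : realType} (n1 n0 m M L : R) : 0 < L -> L <= m -> L <= M ->
  n1 + n0 = m + M -> (n1 - m) ^+ 2 < L ^+ 2 / 32 ->
  [/\ 0 < n1, 0 < n0 & n1^-1 + n0^-1 <= 64/31/L].
Proof.
move=> L0 hm hM hs hd.
set d := n1 - m.
have hdL : - L < d < L.
  have : d ^+ 2 < L ^+ 2 by apply: lt_le_trans hd _; rewrite ler_pdivrMr //; nra.
  move=> h; apply/andP; split; nra.
case/andP: hdL => hd1 hd2.
have a0 : 0 < L + d by lra.
have b0 : 0 < L - d by lra.
have n1a : L + d <= n1 by rewrite /d; lra.
have n0b : L - d <= n0 by rewrite /d; lra.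
have n10 : 0 < n1 by lra.
have n00 : 0 < n0 by lra.
split => //.
apply: le_trans (_ : (L + d)^-1 + (L - d)^-1 <= _).
  by apply: lerD; rewrite lef_pV2 ?posrE.
have pos : 0 < 31 * L * (L + d) * (L - d) by rewrite !mulr_gt0.
rewrite -(ler_pM2r pos).
have -> : ((L + d)^-1 + (L - d)^-1) * (31 * L * (L + d) * (L - d)) = 31 * L * (2 * L).
  by field; apply/andP; split; rewrite gt_eqF.
have -> : 64 / 31 / L * (31 * L * (L + d) * (L - d)) = 64 * (L + d) * (L - d).
  by field; rewrite gt_eqF.
have : d ^+ 2 * 32 <= L ^+ 2 by rewrite -ler_pdivlMr // ltW.
nra.
Qed.

Lemma sub_le1 {R : realType} {N K : nat} (pF : 'I_K * 'I_K -> R) (P : pred (pouts N K)) :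
  is_pmf pF -> \sum_(y | P y) \prod_i pF (y i) <= 1.
Proof.
move=> hF.
have h1 := sum_W (N:=N) pF hF.
rewrite (bigID P) /= in h1.
have : 0 <= \sum_(y : pouts N K | ~~ P y) \prod_i pF (y i).
  by apply: sumr_ge0 => y _; apply: prodr_ge0 => i _; apply: hF.1.
lra.
Qed.

Lemma sub_ge0 {R : realType} {N K : nat} (pF : 'I_K * 'I_K -> R) (P : pred (pouts N K)) :
  is_pmf pF -> 0 <= \sum_(y | P y) \prod_i pF (y i).
Proof.
by move=> hF; apply: sumr_ge0 => y _; apply: prodr_ge0 => i _; apply: hF.1.
Qed.

Theorem theorem1 (R : realType) (N K : nat)
  (yv : 'I_K -> R) (yv_inj : injective yv)
  (pF : 'I_K * 'I_K -> R) (pF_pmf : is_pmf pF)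
  (pZ : assign N -> R) (pZ_pmf : is_pmf pZ)
  (tauhat : assign N -> ('I_N -> R) -> R)
  (Q : Xidx N K -> Xidx N K -> R) (Q_sym : forall s t, Q s t = Q t s)
  (Q_var : forall y : pouts N K, VarZ pZ yv tauhat y = quadf Q (Xtrue y))
  (eps : R) (eps_gt0 : 0 < eps) (Ptil_gt0 : 0 < Ptil pZ) :
  1 - beta pZ eps <=
    Prob pZ pF (fun z y => `[< cstr_d eps z (Xtrue y) >])
  /\
  1 - beta pZ eps <=
    Prob pZ pF (fun z y =>
      `[< exists X : Xvar N K,
            feasible yv pF eps z y X /\ VarZ pZ yv tauhat y <= quadf Q X >]).
Proof.
have hZ := pZ_pmf; have hF := pF_pmf.
set m := \sum_i Pi pZ i.
set L := N%:R * Ptil pZ.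
have Nn0 : (N%:R : R) != 0.
  apply/negP => /eqP hN; move: Ptil_gt0.
  rewrite /Ptil /Pbar hN invr0 mul0r subr0 min_l ?ler01 //; by rewrite ltxx.
have Npos : (0 : R) < N%:R by rewrite lt_neqAle eq_sym Nn0 ler0n.
have hP : N%:R * Pbar pZ = m by rewrite /Pbar mulrA mulfV ?mul1r.
have L0 : 0 < L by rewrite /L mulr_gt0.
have Lm : L <= m.
  by rewrite /L -hP; apply: ler_wpM2l; [exact: ltW | rewrite /Ptil ge_min lexx].
have LM : L <= N%:R - m.
  rewrite /L -hP -[X in _ <= X - _]mulr1 -mulrBr; apply: ler_wpM2l; first exact: ltW.
  by rewrite /Ptil ge_min lexx orbT.
set e8 := 8 * expR (- (eps ^+ 2 * L / 4)).
have e80 : 0 <= e8 by rewrite /e8 mulr_ge0 ?expR_ge0.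
have key : forall z : assign N,
    \sum_(y : pouts N K | ~~ `[< cstr_d eps z (Xtrue y) >]) \prod_i pF (y i)
    <= ((L ^+ 2 / 32 <= (N1 R z - m) ^+ 2)%R : bool)%:R + e8.
  move=> z.
  have f1 := sub_le1 pF (fun y => ~~ `[< cstr_d eps z (Xtrue y) >]) hF.
  case hb: (L ^+ 2 / 32 <= (N1 R z - m) ^+ 2)%R => /=.
    lra.
  rewrite add0r.
  have hd : (N1 R z - m) ^+ 2 < L ^+ 2 / 32 by rewrite ltNge hb.
  have [n10 n00 hS] := Sbound (N1 R z) (N0 R z) m (N%:R - m) L L0 Lm LM ltac:(rewrite /N0; ring) hd.
  case: (ltP eps 1) => he; last first.
    rewrite big1 // => y /asboolPn hy; exfalso; apply: hy => a k.
    by apply: le_trans (D_le1 z y a k n10 n00) he.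
  case: (ltP e8 1) => h8; last by lra.
  apply: goodz => //.
  move: h8; rewrite /e8 expRN.
  have := expR_gt0 (eps ^+ 2 * L / 4) => ep.
  by rewrite ltr_pdivrMr // mul1r.
have sumf : \sum_z pZ z * \sum_(y : pouts N K | ~~ `[< cstr_d eps z (Xtrue y) >]) \prod_i pF (y i)
            <= beta pZ eps.
  apply: le_trans (_ : \sum_z pZ z * (((L ^+ 2 / 32 <= (N1 R z - m) ^+ 2)%R : bool)%:R + e8) <= _).
    by apply: ler_sum => z _; apply: ler_wpM2l; [exact: hZ.1 | exact: key].
  under eq_bigr do rewrite mulrDr.
  rewrite big_split /= -big_distrl /= hZ.2 mul1r.
  have hc := @cheb R N pZ L hZ L0.
  rewrite -/m in hc.
  have -> : beta pZ eps = e8 + 32 / L ^+ 2 * \sum_i \sum_j CovZ pZ i j.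
    rewrite /beta /e8 /L; congr (_ * expR _ + _ / _ * _); ring.
  rewrite addrC; apply: lerD => //.
split.
  rewrite prob_split //; lra.
rewrite prob_split //.
suff : \sum_z pZ z * \sum_(y : pouts N K | ~~ `[< exists X : Xvar N K,
            feasible yv pF eps z y X /\ VarZ pZ yv tauhat y <= quadf Q X >]) \prod_i pF (y i)
  <= \sum_z pZ z * \sum_(y : pouts N K | ~~ `[< cstr_d eps z (Xtrue y) >]) \prod_i pF (y i).
  lra.
apply: ler_sum => z _; apply: ler_wpM2l; first exact: hZ.1.
rewrite [X in X <= _]big_mkcond [X in _ <= X]big_mkcond /=; apply: ler_sum => y _.
have W0 : 0 <= \prod_i pF (y i) by apply: prodr_ge0 => i _; apply: hF.1.
case: (boolP `[< cstr_d eps z (Xtrue y) >]) => hd /=; last first.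
  by case: ifP.
case: (eqVneq (\prod_i pF (y i)) 0) => hW; first by rewrite hW; case: ifP.
suff -> : `[< exists X : Xvar N K,
            feasible yv pF eps z y X /\ VarZ pZ yv tauhat y <= quadf Q X >] by [].
apply/asboolP; exists (Xtrue y); split; last by rewrite Q_var.
split.
- move=> i k; rewrite ffunE /= /Yobs; split.
    by move/eqP ->.
  by move/yv_inj => ->; rewrite eqxx.
- move=> a i k hs; rewrite ffunE /=; apply/negP => /eqP hk.
  move: hs; rewrite /suppF => /negP; apply.
  have pi0 : 0 < pF (y i).
    rewrite lt_neqAle hF.1 andbT eq_sym; apply/eqP => h0; move/eqP: hW; apply.
    by rewrite (bigD1 i) //= h0 mul0r.
  rewrite -margF_sum; apply: lt_le_trans pi0 _.
  rewrite (bigD1 (y i)) /=; last by rewrite -hk /Ylab /lab.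
  rewrite lerDl; apply: sumr_ge0 => v _; apply: hF.1.
- move=> a i; rewrite (bigD1 (Ylab y a i)) //= ffunE /= eqxx big1 // => k hk.
  by rewrite ffunE /= eq_sym (negbTE hk).
- exact/asboolP.
Qed.
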